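(* Let $K$ be a Cantor set, let $T:K\to K$ be a homeomorphism, and let $K_1,\dots,K_N$ be pairwise disjoint Cantor sets with $K=\bigcup_{i=1}^N K_i$. Suppose that for every $1\le i\le N$ at least one of the following holds: (i) for every $y\in K_i$, $T^{-1}(y)\in K_i$; (ii) for every $x\in K_i$, $T(x)\in K_i$. Then there exists a homeomorphism $\widetilde T:K\to K$ such that for every $x\in K$ and every $i$, $\widetilde T(x)\in K_i$ if and only if $T(x)\in K_i$, and every orbit of $\widetilde T$ converges to a fixed point of $\widetilde T$.
   Context: A Cantor set is a nonempty totally disconnected, perfect, compact metric space. *)

(* Defs.v *)
From HB Require Import structures.
From mathcomp Require Import all_boot all_order all_algebra.
From mathcomp Require Import all_classical all_reals all_analysis.
Set Implicit Arguments. Unset Strict Implicit. Unset Printing Implicit Defensive.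
Import Order.TTheory GRing.Theory Num.Theory.
Local Open Scope classical_set_scope.

Definition cantor_set {T : topologicalType} (A : set T) : Prop :=
  [/\ A !=set0, compact A, totally_disconnected A & perfect_set A].

Definition homeomorphism {T : topologicalType} (f : T -> T) : Prop :=
  exists g : T -> T, [/\ cancel f g, cancel g f, continuous f & continuous g].

(* Main.v *)
Require Import Defs.
From HB Require Import structures.
From mathcomp Require Import all_boot all_order all_algebra.
From mathcomp Require Import all_classical all_reals all_analysis.
Import Order.TTheory GRing.Theory Num.Theory.
Local Open Scope classical_set_scope.
Set Implicit Arguments. Unset Strict Implicit. Unset Printing Implicit Defensive.
Lemma zd_of_td {T : topologicalType} : hausdorff_space T -> compact [set: T] ->
  totally_disconnected [set: T] -> zero_dimensional T.
Proof.
move=> hT cT td x y xy.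
pose Q := \bigcap_(C in [set C | clopen C /\ C x]) C.
have Qx : Q x by move=> C [].
have cQ : closed Q by apply: closed_bigI => C [[]].
have key : forall P1 P2, closed P1 -> closed P2 -> P1 `&` P2 = set0 ->
    Q = P1 `|` P2 -> P1 x -> P2 = set0.
  move=> P1 P2 c1 c2 d12 QE P1x.
  have nT := compact_normal hT cT.
  have : set_nbhs P1 (~` P2).
    apply/set_nbhsP; exists (~` P2); split => //; first exact: closed_openC.
    by move=> z P1z P2z; have : (P1 `&` P2) z by []; rewrite d12.
  move=> /(nT _ c1) [W /set_nbhsP [U [oU P1U UW]] clW].
  pose V := ~` closure W.
  have oV : open V by exact/closed_openC/closed_closure.
  have P2V : P2 `<=` V by move=> z P2z /clW.
  have UV : U `&` V = set0.
    by apply/seteqP; split => // z [/UW Wz]; apply; exact: subset_closure.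
  have [C [clC Cx CUV]] : exists C, [/\ clopen C, C x & C `<=` U `|` V].
    apply: contrapT => nC.
    pose F := filter_from [set C | clopen C /\ C x] (fun C => C `&` ~` (U `|` V)).
    have FF : ProperFilter F.
      apply: filter_from_proper.
        apply: filter_from_filter; first by exists setT; split => //; exact: clopenT.
        move=> A B [cA Ax] [cB Bx]; exists (A `&` B); first by split => //; exact: clopenI.
        by move=> z [[Az Bz] nz]; split; split.
      move=> A [cA Ax]; apply: contrapT => hne; apply: nC; exists A; split => //.
      by move=> z Az; apply: contrapT => nz; apply: hne; exists z; split.
    have [z [_ clz]] := cT F FF filterT.
    rewrite clusterE in clz.
    have zF : forall C, clopen C -> C x -> (C `&` ~` (U `|` V)) z.
      move=> C0 cC0 C0x.
      have cl : closed (C0 `&` ~` (U `|` V)).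
        apply: closedI; first by case: cC0.
        by apply: open_closedC; exact: openU.
      rewrite ((closure_id _).1 cl); apply: clz; exists C0 => //.
    have Qz : Q z by move=> C0 [cC0 C0x]; have [] := zF C0 cC0 C0x.
    have [_] := zF setT clopenT I; apply.
    by move: Qz; rewrite QE => -[/P1U|/P2V]; [left|right].
  have clW' : clopen (C `&` U).
    split; first by apply: openI => //; case: clC.
    have -> : C `&` U = C `&` ~` V.
      apply/seteqP; split => z [Cz].
        by move=> Uz; split => // Vz; have : (U `&` V) z by []; rewrite UV.
      by move=> nVz; split => //; case: (CUV _ Cz).
    by apply: closedI; [case: clC | exact: open_closedC].
  have QU : Q `<=` U by move=> z Qz; have [] := Qz _ (conj clW' (conj Cx (P1U _ P1x))).
  apply/seteqP; split => // z P2z.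
  have : (U `&` V) z by split; [apply: QU; rewrite QE; right | exact: P2V].
  by rewrite UV.
have conQ : connected Q.
  move=> B B0 [Op oO BQO] [Fc cF BQF].
  have cB : closed B by rewrite BQF; exact: closedI.
  have cN : closed (Q `&` ~` Op) by apply: closedI => //; exact: open_closedC.
  have QE1 : Q = B `|` (Q `&` ~` Op).
    rewrite BQO; apply/seteqP; split => [z Qz|z [[]|[]]//].
    by have [Oz|nOz] := pselect (Op z); [left|right].
  have dj : B `&` (Q `&` ~` Op) = set0.
    by rewrite BQO; apply/seteqP; split => // z [[_ ?] [_ ?]].
  have [Bx|nBx] := pselect (B x).
    have P0 := key _ _ cB cN dj QE1 Bx.
    by rewrite QE1 P0 setU0.
  have dj' : (Q `&` ~` Op) `&` B = set0 by rewrite setIC.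
  have Opx : ~ Op x by move=> Opx; apply: nBx; rewrite BQO.
  have := key _ _ cN cB dj' (etrans QE1 (setUC _ _)) (conj Qx Opx).
  by move=> B00; case: B0 => z; rewrite B00.
have Qy : ~ Q y.
  move=> Qy; have : connected_component [set: T] x y by exists Q.
  by rewrite td // => /= yx; move: xy; rewrite yx eqxx.
apply: contrapT => nC; apply: Qy => C [cC Cx]; apply: contrapT => nCy.
by apply: nC; exists C.
Qed.
Definition pS {R : realType} {K : pseudoMetricType R} (S : set K) (s : S) : Type := set_type S.
HB.instance Definition _ {R : realType} {K : pseudoMetricType R} (S : set K) (s : S) :=
  PseudoMetric.on (pS s).
HB.instance Definition _ {R : realType} {K : pseudoMetricType R} (S : set K) (s : S) :=
  isPointed.Build (pS s) s.

Section model.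
Context {R : realType} {K : pseudoMetricType R} (S : set K) (s : S).

Lemma open_pS (U : set (pS s)) : open U <-> exists2 Op : set K, open Op & (fun v : pS s => Op (val v)) = U.
Proof. split. move=> [Op oO <-]. by exists Op. move=> [Op oO <-]. by exists Op. Qed.

Lemma nbhs_pS (u : pS s) (U : set (pS s)) :
  nbhs u U <-> exists Op : set K, [/\ open Op, Op (val u) & forall v : pS s, Op (val v) -> U v].
Proof.
rewrite nbhsE; split.
  by move=> [B [/open_pS [Op oO <-] Ou] BU]; exists Op; split => // v /BU.
move=> [Op [oO Ou OU]]; exists (fun v : pS s => Op (val v)) => //.
by split => //; apply/open_pS; exists Op.
Qed.

Hypothesis hK : hausdorff_space K.
Hypothesis cK : compact [set: K].
Hypothesis pK : perfect_set [set: K].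
Hypothesis zK : zero_dimensional K.
Hypothesis clS : clopen S.

Let mk (y : K) (Sy : S y) : pS s := @exist _ _ y (mem_set Sy).

Lemma pS_cantor_like : cantor_like (pS s).
Proof.
split.
- split; first exact: closedT.
  apply/seteqP; split => // u _ U /nbhs_pS [Op [oO Ou OU]].
  have Su : S (val u) by apply/set_mem; exact: (valP u).
  have nb : nbhs (val u) (Op `&` S).
    by apply: open_nbhs_nbhs; split => //; apply: openI => //; case: clS.
  case: pK => _ lp.
  have : limit_point [set: K] (val u) by rewrite lp.
  move=> /(_ _ nb) [y [yu _ [Oy Sy]]].
  exists (mk Sy); split => //; last exact: OU.
- move=> F PF _.
  have cS : compact S.
    by apply: (subclosed_compact _ cK) => //; case: clS.
  have PG : ProperFilter (val @ F) by exact: fmap_proper_filter.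
  have GS : (val @ F) S.
    have : F [set u : pS s | S (val u)].
      by apply: filterS filterT => u _; apply/set_mem; exact: (valP u).
    by [].
  have [y [Sy cly]] := cS _ PG GS.
  exists (mk Sy); split => //.
  move=> A B FA /nbhs_pS [Op [oO Oy OB]].
  have GA : F (val @^-1` (val @` A)) by apply: filterS FA => u Au; exists u.
  have nO : nbhs y Op by exact: open_nbhs_nbhs.
  have [z [[a Aa <-] Oa]] := cly _ _ GA nO.
  by exists a; split => //; exact: OB.
- rewrite open_hausdorff => u v uv.
  have : val u != val v by apply: contra uv => /eqP /val_inj ->.
  move: hK; rewrite open_hausdorff => hK' /hK' [[A B] /= [Au Bv] [oA oB AB]].
  exists ((fun w : pS s => A (val w)), (fun w : pS s => B (val w))) => /=.
    by split; rewrite inE; [move: Au | move: Bv]; rewrite inE.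
  split; [apply/open_pS; exists A|apply/open_pS; exists B|] => //.
  apply/eqP/seteqP; split => // w [Aw Bw].
  by move/eqP: AB => AB; have : (A `&` B) (val w) by []; rewrite AB.
- move=> u v uv.
  have : val u != val v by apply: contra uv => /eqP /val_inj ->.
  move=> /zK [U [[oU cU] Uu Uv]].
  exists (fun w : pS s => U (val w)); split => //; split.
    by apply/open_pS; exists U.
  have -> : (fun w : pS s => U (val w)) = ~` (fun w : pS s => (~` U) (val w)).
    by apply/seteqP; split => w /=; [move=> Uw nUw; exact: nUw Uw | move=> nn; apply: contrapT => nUw; exact: nn nUw].
  by apply: (@open_closedC (pS s)); apply/open_pS; exists (~` U) => //; exact: closed_openC.
Qed.


Lemma model : exists (phi : K -> cantor_space) (psi : cantor_space -> K),
  [/\ (forall c, S (psi c)), (forall c, phi (psi c) = c),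
      (forall x, S x -> psi (phi x) = x), continuous psi &
      (forall x, S x -> {for x, continuous phi})].
Proof.
have [f [cf clf]] := @homeomorphism_cantor_like R (pS s) pS_cantor_like.
exists (fun x => f^-1 (insubd s x)), (fun c => val (f c)); split.
- by move=> c; apply/set_mem; exact: (valP (f c)).
- by move=> c /=; rewrite valKd funK // inE.
- by move=> x Sx /=; rewrite invK ?inE // insubdK //; exact: mem_set.
- move=> c; apply: continuous_comp; first exact: cf.
  move=> U; rewrite nbhsE => -[B [oB Bfc] BU].
  apply/nbhs_pS; exists B; split => //.
  by move=> v /BU.
- move=> x Sx; apply: (@continuous_comp K (pS s) cantor_space (insubd s) (f^-1)%FUN).
    move=> U /nbhs_pS [Op [oO Ox OU]].
    apply: (@filterS _ _ _ (Op `&` S)).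
      move=> z [Oz Sz] /=; apply: OU; rewrite insubdK //; exact: mem_set.
    apply: open_nbhs_nbhs; split; first by apply: openI => //; case: clS.
    by split => //; move: Ox; rewrite insubdK //; exact: mem_set.
  have : continuous (f^-1 : pS s -> cantor_space).
    apply/continuous_closedP => A cA.
    have -> : f^-1 @^-1` A = f @` A.
      apply/seteqP; split => z.
        by move=> Az; exists (f^-1 z) => //; rewrite invK // inE.
      by move=> [a Aa <-] /=; rewrite funK // inE.
    exact: clf.
  by move=> h; exact: h.
Qed.
End model.
Definition ccons (b : bool) (c : cantor_space) : cantor_space :=
  fun n => if n is k.+1 then c k else b.
Definition ctl (c : cantor_space) : cantor_space := fun n => c n.+1.
Definition cz0 : cantor_space := fun _ => false.

Lemma cvgC {X : Type} (F : set_system X) (FF : Filter F) (g : X -> cantor_space) (c : cantor_space) :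
  g @ F --> c <-> forall t, F [set x | g x t = c t].
Proof.
have := @pointwise_cvgP nat bool (g @ F) c (fmap_filter _ _).
move=> ->; split => h t.
  by have /discrete_cvg := h t.
apply/discrete_cvg; last exact: h t.
Qed.

Lemma nbhs_coord (c : cantor_space) k : nbhs c [set g : cantor_space | g k = c k].
Proof. by have /cvgC := @cvg_id _ (nbhs c); apply. Qed.

Lemma ccons_continuous b : continuous (ccons b).
Proof.
move=> c; apply/(@cvgC _ (nbhs c) _) => -[|k] /=.
  by apply: (@filterS _ _ _ setT) => //; exact: filterT.
exact: nbhs_coord.
Qed.

Lemma ctl_continuous : continuous ctl.
Proof. by move=> c; apply/(@cvgC _ (nbhs c) _) => k; exact: nbhs_coord. Qed.

Lemma iter_ccons_false (c : cantor_space) n t : (t < n)%N -> iter n (ccons false) c t = false.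
Proof.
elim: n t => [//|n IH] [|t] //= tn.
exact: IH.
Qed.

Lemma iter_ccons_cvg (c : cantor_space) :
  (fun n => iter n (ccons false) c) @ \oo --> cz0.
Proof.
apply/(@cvgC _ \oo _) => t; exists t.+1 => // n /= tn.
exact: iter_ccons_false.
Qed.


Lemma cont_near {X Y : topologicalType} (f g : X -> Y) x :
  (\forall y \near x, f y = g y) -> {for x, continuous g} -> {for x, continuous f}.
Proof.
move=> e cg U; have fxgx : f x = g x := nbhs_singleton e.
rewrite fxgx => /cg gU; apply: (filterS _ (filterI e gU)) => y [fy gy].
by rewrite /= fy.
Qed.

Lemma ccons_ctl c : ccons (c 0%N) (ctl c) = c.
Proof. by apply: functional_extensionality_dep => -[|n]. Qed.

Lemma ccons_cz0 : ccons false cz0 = cz0.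
Proof. by apply: functional_extensionality_dep => -[|n]. Qed.

Section contraction.
Context {R : realType} {K : pseudoMetricType R}.
Hypotheses (hK : hausdorff_space K) (cK : compact [set: K]) (pK : perfect_set [set: K])
  (zK : zero_dimensional K).

Lemma model' (S : set K) : clopen S -> S !=set0 ->
  exists (phi : K -> cantor_space) (psi : cantor_space -> K),
  [/\ (forall c, S (psi c)), (forall c, phi (psi c) = c),
      (forall x, S x -> psi (phi x) = x), continuous psi &
      (forall x, S x -> {for x, continuous phi})].
Proof.
move=> clS [s0 Ss0].
exact: (@model R K S (exist _ s0 (mem_set Ss0)) hK cK pK zK clS).
Qed.


Lemma contract_model (A B : set K) : clopen A -> clopen B -> A !=set0 -> B !=set0 ->
  A `&` B = set0 ->
  exists (h h' : K -> K) (p : K),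
  [/\ (forall x, (A `|` B) x -> A (h x)),
      (forall y, A y -> (A `|` B) (h' y)),
      (forall x, (A `|` B) x -> h' (h x) = x) &
      (forall y, A y -> h (h' y) = y)] /\
  [/\ (forall x, (A `|` B) x -> {for x, continuous h}),
      (forall y, A y -> {for y, continuous h'}),
      A p /\ h p = p,
      (forall x, A x -> (fun n => iter n h x) @ \oo --> p) &
      (forall y, A y -> y = p \/ exists n, (forall m, (m < n)%N -> A (iter m h' y)) /\
                                        B (iter n h' y))].
Proof.
move=> clA clB A0 B0 AB.
have [phi1 [psi1 [psi1A phi1K psi1K cpsi1 cphi1]]] := model' clA A0.
have [phi2 [psi2 [psi2B phi2K psi2K cpsi2 cphi2]]] := model' clB B0.
have AnB x : A x -> ~ B x.
  by move=> Ax Bx; have : (A `&` B) x by []; rewrite AB.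
have oA : open A by case: clA.
have oB : open B by case: clB.
pose h x := if pselect (A x) then psi1 (ccons false (phi1 x)) else psi1 (ccons true (phi2 x)).
pose h' y := if phi1 y 0%N then psi2 (ctl (phi1 y)) else psi1 (ctl (phi1 y)).
have hA x : A x -> h x = psi1 (ccons false (phi1 x)).
  by move=> Ax; rewrite /h; case: pselect.
have hB x : B x -> h x = psi1 (ccons true (phi2 x)).
  by move=> Bx; rewrite /h; case: pselect => // Ax; case: (AnB _ Ax Bx).
exists h, h', (psi1 cz0); split; split.
- by move=> x _; rewrite /h; case: pselect => ?; exact: psi1A.
- move=> y _; rewrite /h'; case: ifP => _; [right; exact: psi2B | left; exact: psi1A].
- move=> x [Ax|Bx].
    by rewrite hA // /h' phi1K /=; exact: psi1K.
  by rewrite hB // /h' phi1K /=; exact: psi2K.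
- move=> y Ay; rewrite /h'; case E: (phi1 y 0%N).
    rewrite hB; last exact: psi2B.
    by rewrite phi2K; have := ccons_ctl (phi1 y); rewrite E => ->; exact: psi1K.
  rewrite hA; last exact: psi1A.
  by rewrite phi1K; have := ccons_ctl (phi1 y); rewrite E => ->; exact: psi1K.
- move=> x [Ax|Bx].
    apply: (@cont_near _ _ _ (psi1 \o ccons false \o phi1)).
      by apply: filterS (open_nbhs_nbhs (conj oA Ax)) => z Az; rewrite hA.
    apply: continuous_comp; first exact: cphi1.
    by apply: continuous_comp; [exact: ccons_continuous | exact: cpsi1].
  apply: (@cont_near _ _ _ (psi1 \o ccons true \o phi2)).
    by apply: filterS (open_nbhs_nbhs (conj oB Bx)) => z Bz; rewrite hB.
  apply: continuous_comp; first exact: cphi2.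
  by apply: continuous_comp; [exact: ccons_continuous | exact: cpsi1].
- move=> y Ay.
  have nb : \forall z \near y, phi1 z 0%N = phi1 y 0%N.
    exact: (cphi1 y Ay _ (nbhs_coord (phi1 y) 0)).
  case E: (phi1 y 0%N).
    apply: (@cont_near _ _ _ (psi2 \o ctl \o phi1)).
      by apply: filterS nb => z; rewrite /h' E => ->.
    apply: continuous_comp; first exact: cphi1.
    by apply: continuous_comp; [exact: ctl_continuous | exact: cpsi2].
  apply: (@cont_near _ _ _ (psi1 \o ctl \o phi1)).
    by apply: filterS nb => z; rewrite /h' E => ->.
  apply: continuous_comp; first exact: cphi1.
  by apply: continuous_comp; [exact: ctl_continuous | exact: cpsi1].
- by split; [exact: psi1A | rewrite hA ?phi1K ?ccons_cz0 //; exact: psi1A].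
- move=> x Ax.
  have it n : iter n h x = psi1 (iter n (ccons false) (phi1 x)).
    elim: n => [|n IH] /=; first by rewrite psi1K.
    by rewrite IH hA ?phi1K //; exact: psi1A.
  have -> : (fun n => iter n h x) = psi1 \o (fun n => iter n (ccons false) (phi1 x)).
    by apply: functional_extensionality_dep => n; rewrite it.
  apply: continuous_cvg; first exact: cpsi1.
  exact: iter_ccons_cvg.
- move=> y Ay; set c := phi1 y.
  have [[k ck]|nk] := pselect (exists k, c k = true).
    right.
    have exP : exists k, c k by exists k; rewrite ck.
    have [n0 cn0 minn0] := ex_minnP exP.
    have it m : (m <= n0)%N -> iter m h' y = psi1 (fun i => c (i + m)%N).
      elim: m => [|m IH] mn /=.
        have -> : (fun i => c (i + 0)%N) = c.
          by apply: functional_extensionality_dep => i; rewrite addn0.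
        by rewrite psi1K.
      rewrite IH ?(ltnW mn) // /h' phi1K /= add0n.
      have -> : c m = false.
        apply/negbTE/negP => cm; have := minn0 _ cm; rewrite leqNgt mn //.
      congr psi1; apply: functional_extensionality_dep => i.
      by rewrite /ctl addSnnS.
    exists n0.+1; split.
      by move=> m mn; rewrite it // ; exact: psi1A.
    by rewrite /= it // /h' phi1K /= add0n cn0; exact: psi2B.
  left.
  have cz : c = cz0.
    apply: functional_extensionality_dep => k.
    by apply/negbTE/negP => ck; apply: nk; exists k.
  by rewrite -(psi1K y Ay) -/c cz.
Qed.

End contraction.

Lemma cvg_shift1 {V : topologicalType} (u : nat -> V) (l : V) :
  (fun n => u n.+1) @ \oo --> l -> u @ \oo --> l.
Proof.
move=> h U /h [N _ HN]; exists N.+1 => // -[|n] //= Nn; exact: HN.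
Qed.

Unset Implicit Arguments.

Theorem lemma4p1 (R : realType) (K : pseudoMetricType R)
  (hK : hausdorff_space K) (cK : cantor_set [set: K])
  (T : K -> K) (hT : homeomorphism T)
  (N : nat) (Ks : 'I_N -> set K)
  (cKs : forall i, cantor_set (Ks i))
  (disj : forall i j, i != j -> Ks i `&` Ks j = set0)
  (cover : \bigcup_i Ks i = [set: K])
  (cond : forall i,
     (forall y, Ks i y -> forall x, T x = y -> Ks i x) \/
     (forall x, Ks i x -> Ks i (T x))) :
  exists Tt : K -> K,
    [/\ homeomorphism Tt,
        (forall x i, Ks i (Tt x) <-> Ks i (T x)) &
        (forall x, exists p : K, Tt p = p /\ (fun n => iter n Tt x) @ \oo --> p)].
Proof.
have [g [Tg gT cT cg]] := hT.
case: cK => _ cpK tdK pfK.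
have zK := zd_of_td hK cpK tdK.
have uniqK : forall i j z, Ks i z -> Ks j z -> i = j.
  move=> i j z Ki Kj; apply/eqP; apply: contraT => ij.
  by have : (Ks i `&` Ks j) z by []; rewrite disj.
have coverP : forall z, exists i, Ks i z.
  move=> z; have : (\bigcup_i Ks i) z by rewrite cover.
  by case=> i _ ?; exists i.
have clK : forall i, clopen (Ks i).
  move=> i; have [_ cpi _ _] := cKs i; have ci := compact_closed hK cpi.
  split=> //; rewrite openE => x Kix.
  have : \forall z \near x, forall j, j != i -> ~ Ks j z.
    apply: filter_forall => j; case: (eqVneq j i) => [->|ji].
      by apply: nearW => z /eqP.
    have [_ cpj _ _] := cKs j; have cj := compact_closed hK cpj.
    have nKjx : ~ Ks j x by move=> Kjx; move/negP: ji; apply; rewrite (uniqK _ _ _ Kjx Kix).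
    by apply: filterS (open_nbhs_nbhs (conj (closed_openC cj) nKjx)) => z nz _.
  apply: filterS => z hz; have [k Kk] := coverP z.
  by case: (eqVneq k i) => [<-//|ki]; case: (hz _ ki Kk).
pose L i := [set x | Ks i (T x)].
have clL : forall i, clopen (L i).
  move=> i; have [oi ci] := clK i; split.
    by move/continuousP: cT; apply.
  by move/continuous_closedP: cT; apply.
have K0 : forall i, Ks i !=set0 by move=> i; case: (cKs i).
have L0 : forall i, L i !=set0.
  by move=> i; have [y Ky] := K0 i; exists (g y); rewrite /L /= gT.
have piece : forall i, exists F G : K -> K,
  [/\ (forall x, L i x -> Ks i (F x)), (forall y, Ks i y -> L i (G y)),
      (forall x, L i x -> G (F x) = x), (forall y, Ks i y -> F (G y) = y) &
      (forall x, L i x -> {for x, continuous F})] /\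
  (forall y, Ks i y -> {for y, continuous G}) /\
  [\/ (forall x, L i x -> F x = x),
      ((forall x, L i x -> Ks i x) /\ exists p, [/\ L i p, F p = p &
         forall x, L i x -> x = p \/ exists n, (forall m, (m < n)%N -> L i (iter m F x)) /\
              (Ks i (iter n F x) /\ ~ L i (iter n F x))]) |
      ((forall x, Ks i x -> L i x) /\ exists p, [/\ Ks i p, F p = p &
         forall x, Ks i x -> (fun n => iter n F x) @ \oo --> p])].
  move=> i.
  have [eqL|neqL] := pselect (forall x, L i x <-> Ks i x).
    exists id, id; split; [split|split].
    - by move=> x /eqL.
    - by move=> y /eqL.
    - by [].
    - by [].
    - by move=> x _; exact: cvg_id.
    - by move=> y _; exact: cvg_id.
    - by apply: Or31.
  case: (cond i) => [c1|c2].
    have LK : forall x, L i x -> Ks i x by move=> x Lx; exact: (c1 (T x) Lx x erefl).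
    pose B := Ks i `&` ~` L i.
    have clB : clopen B by apply: clopenI; [exact: clK | exact: clopenC].
    have B0 : B !=set0.
      apply: contrapT => nB; apply: neqL => x; split; first exact: LK.
      by move=> Kx; apply: contrapT => nL; apply: nB; exists x; split.
    have dj : L i `&` B = set0 by apply/seteqP; split => // z [? [_ ?]].
    have [h [h' [p [[hA h'AB h'h hh'] [ch ch' [Ap hp] hconv hdyn]]]]] :=
      contract_model hK cpK pfK zK (clL i) clB (L0 i) B0 dj.
    have LB y : Ks i y -> (L i `|` B) y.
      by move=> Ky; have [Ly|nLy] := pselect (L i y); [left|right].
    exists h', h; split; [split|split].
    - by move=> x /h'AB [/LK|[]].
    - by move=> y /LB /hA.
    - by move=> x /hh'.
    - by move=> y /LB /h'h.
    - by move=> x /ch'.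
    - by move=> y /LB /ch.
    - apply: Or32; split => //; exists p; split => //.
        by rewrite -{1}hp h'h //; left.
  pose B := L i `&` ~` Ks i.
  have clB : clopen B by apply: clopenI; [exact: clL | exact: clopenC].
  have B0 : B !=set0.
    apply: contrapT => nB; apply: neqL => x; split; last exact: c2.
    by move=> Lx; apply: contrapT => nK; apply: nB; exists x; split.
  have dj : Ks i `&` B = set0 by apply/seteqP; split => // z [? [_ ?]].
  have [h [h' [p [[hA h'AB h'h hh'] [ch ch' [Ap hp] hconv hdyn]]]]] :=
    contract_model hK cpK pfK zK (clK i) clB (K0 i) B0 dj.
  have KB y : L i y -> (Ks i `|` B) y.
    by move=> Ly; have [Ky|nKy] := pselect (Ks i y); [left|right].
  exists h, h'; split; [split|split].
  - by move=> x /KB /hA.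
  - by move=> y /h'AB [/c2|[]].
  - by move=> x /KB /h'h.
  - by move=> y /hh'.
  - by move=> x /KB /ch.
  - by move=> y /ch'.
  - apply: Or33; split => //; exists p; split => //.
pose F i := projT1 (cid (piece i)).
pose G i := projT1 (cid (projT2 (cid (piece i)))).
have FGP : forall i,
  [/\ (forall x, L i x -> Ks i ((F i) x)), (forall y, Ks i y -> L i ((G i) y)),
      (forall x, L i x -> (G i) ((F i) x) = x), (forall y, Ks i y -> (F i) ((G i) y) = y) &
      (forall x, L i x -> {for x, continuous (F i)})] /\
  (forall y, Ks i y -> {for y, continuous (G i)}) /\
  [\/ (forall x, L i x -> (F i) x = x),
      ((forall x, L i x -> Ks i x) /\ exists p, [/\ L i p, (F i) p = p &
         forall x, L i x -> x = p \/ exists n, (forall m, (m < n)%N -> L i (iter m (F i) x)) /\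
              (Ks i (iter n (F i) x) /\ ~ L i (iter n (F i) x))]) |
      ((forall x, Ks i x -> L i x) /\ exists p, [/\ Ks i p, (F i) p = p &
         forall x, Ks i x -> (fun n => iter n (F i) x) @ \oo --> p])].
  by move=> i; exact: (projT2 (cid (projT2 (cid (piece i))))).
pose idx x := projT1 (cid (coverP (T x))).
have idxP x : L (idx x) x := projT2 (cid (coverP (T x))).
pose jdx y := projT1 (cid (coverP y)).
have jdxP y : Ks (jdx y) y := projT2 (cid (coverP y)).
have idxE x i : L i x -> idx x = i by move=> Lx; exact: uniqK _ _ _ (idxP x) Lx.
have jdxE y i : Ks i y -> jdx y = i by move=> Ky; exact: uniqK _ _ _ (jdxP y) Ky.
pose Tt x := F (idx x) x.
pose Ti y := G (jdx y) y.
have TtE x i : L i x -> Tt x = F i x by move=> Lx; rewrite /Tt (idxE _ _ Lx).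
have TiE y i : Ks i y -> Ti y = G i y by move=> Ky; rewrite /Ti (jdxE _ _ Ky).
have TtK x : Ks (idx x) (Tt x).
  by have [[FK _ _ _ _] _] := FGP (idx x); exact: FK.
exists Tt; split.
- exists Ti; split.
  + move=> x; have [[FK GL GF FG cF] _] := FGP (idx x).
    by rewrite (TiE _ _ (TtK x)) GF.
  + move=> y; have [[FK GL GF FG cF] _] := FGP (jdx y).
    by rewrite (TtE _ _ (GL _ (jdxP y))) FG.
  + move=> x; have [[FK GL GF FG cF] _] := FGP (idx x).
    apply: (@cont_near _ _ _ (F (idx x))); last exact: cF.
    have [oL _] := clL (idx x).
    by apply: filterS (open_nbhs_nbhs (conj oL (idxP x))) => z /TtE.
  + move=> y; have [_ [cG _]] := FGP (jdx y).
    apply: (@cont_near _ _ _ (G (jdx y))); last exact: cG.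
    have [oK _] := clK (jdx y).
    by apply: filterS (open_nbhs_nbhs (conj oK (jdxP y))) => z /TiE.
- move=> x i; split => Ki.
    by rewrite (uniqK _ _ _ Ki (TtK x)); exact: idxP.
  by rewrite (uniqK _ _ _ Ki (idxP x)).
pose Conv x := exists p, Tt p = p /\ (fun n => iter n Tt x) @ \oo --> p.
have ConvS x : Conv (Tt x) -> Conv x.
  move=> [p [Tp cv]]; exists p; split => //; apply: cvg_shift1.
  by under eq_fun => n do rewrite iterSr.
have ConvN n x : Conv (iter n Tt x) -> Conv x.
  elim: n x => [//|n IH] x; rewrite iterSr => /IH; exact: ConvS.
have fixC x : Tt x = x -> Conv x.
  move=> Tx; exists x; split => //.
  have -> : (fun n => iter n Tt x) = (fun _ => x).
    by apply: functional_extensionality_dep; elim => //= n ->.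
  exact: cvg_cst.
have conv3 j : (forall x, Ks j x -> L j x) ->
    (exists p, [/\ Ks j p, F j p = p &
         forall x, Ks j x -> (fun n => iter n (F j) x) @ \oo --> p]) ->
    forall y, Ks j y -> Conv y.
  move=> KL [p [Kp Fp cv]] y Ky.
  have [[FK _ _ _ _] _] := FGP j.
  have it n : Ks j (iter n (F j) y) /\ iter n Tt y = iter n (F j) y.
    elim: n => [|n [Kn IH]] //=; rewrite IH (TtE _ _ (KL _ Kn)); split => //.
    exact/FK/KL.
  exists p; split; first by rewrite (TtE _ _ (KL _ Kp)).
  have -> : (fun n => iter n Tt y) = (fun n => iter n (F j) y).
    by apply: functional_extensionality_dep => n; have [] := it n.
  exact: cv.
move=> x; pose i := idx x.
have [[FK GL GF FG cF] [cG [T1|[LK [p [Lp Fp dyn]]]|[KL P3]]]] := FGP i.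
- by apply: fixC; rewrite (TtE _ _ (idxP x)); exact: T1 (idxP x).
- have [xp|[n [Hm [Kn nLn]]]] := dyn x (idxP x).
    by apply: fixC; rewrite xp (TtE _ _ Lp).
  have it m : (m <= n)%N -> iter m Tt x = iter m (F i) x.
    elim: m => [//|m IH] mn /=; rewrite IH ?(ltnW mn) //.
    exact: TtE (Hm _ mn).
  apply: (ConvN n); rewrite it //.
  set z := iter n (F i) x in Kn nLn *.
  pose j := idx z.
  have ji : j != i.
    by apply/eqP => ji; apply: nLn; rewrite -ji; exact: idxP.
  have nKj : ~ Ks j z.
    by move=> Kj; move/eqP: ji; apply; exact: uniqK Kj Kn.
  have [[FKj _ _ _ _] [_ [T1j|[LKj _]|[KLj P3j]]]] := FGP j.
  + by case: nKj; rewrite -(T1j _ (idxP z)); exact: FKj (idxP z).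
  + by case: nKj; exact: LKj (idxP z).
  + apply: ConvS; apply: (conv3 j KLj P3j).
    by rewrite (TtE _ _ (idxP z)); exact: FKj (idxP z).
- apply: ConvS; apply: (conv3 i KL P3).
  by rewrite (TtE _ _ (idxP x)); exact: FK (idxP x).
Qed.
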